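(* Let $\mathcal{G}\subseteq C(\mathbb{R},\mathbb{R})$ be nonempty. The following conditions are equivalent: (1) $\mathcal{K}_\mathcal{G}\subseteq\{\mathrm{CL}(E):E\in\mathrm{CL}(\mathbb{R})\}$; (2) there exist $h_1,h_2\in C(\mathbb{R},\mathbb{R}^* )$ such that $\mathcal{G}=\{g\in C(\mathbb{R},\mathbb{R}):h_1\le g\le h_2\}$.
   Context: $\mathbb{R}^*=\mathbb{R}\cup\{-\infty,\infty\}$ with its usual order topology; $C(\mathbb{R},\mathbb{R}^* )$ is the set of continuous functions $\mathbb{R}\to\mathbb{R}^*$, and $h\le g$ means $h(x)\le g(x)$ for all $x\in\mathbb{R}$. For a closed set $E\subseteq\mathbb{R}$, $\mathrm{CL}(E)$ denotes the family of all closed subsets of $E$. For $\mathcal{G}\subseteq C(\mathbb{R},\mathbb{R})$ let $R_\mathcal{G}=\{(f,E)\in C(\mathbb{R},\mathbb{R})\times\mathrm{CL}(\mathbb{R}):(\exists g\in\mathcal{G})\, f\restriction E=g\restriction E\}$; for $\mathcal{F}\subseteq C(\mathbb{R},\mathbb{R})$ put $E_\mathcal{G}(\mathcal{F})=\{E\in\mathrm{CL}(\mathbb{R}):(\forall f\in\mathcal{F})\,(f,E)\in R_\mathcal{G}\}$, and let $\mathcal{K}_\mathcal{G}=\{E_\mathcal{G}(\mathcal{F}):\mathcal{F}\subseteq C(\mathbb{R},\mathbb{R})\}$. *)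

(* Defs.v *)
From HB Require Import structures.
From mathcomp Require Import all_boot all_order all_algebra.
From mathcomp Require Import all_classical all_reals all_analysis.
Set Implicit Arguments. Unset Strict Implicit. Unset Printing Implicit Defensive.
Import Order.TTheory GRing.Theory Num.Theory.
Import numFieldNormedType.Exports.
Local Open Scope classical_set_scope.
Local Open Scope ring_scope.

Section Defs.
Variable R : realType.

Definition Cfun : set (R -> R) := [set f : R -> R | continuous f].

Definition CL (E : set R) : set (set R) := [set F | closed F /\ F `<=` E].

Definition RG (G : set (R -> R)) (f : R -> R) (E : set R) : Prop :=
  Cfun f /\ closed E /\ exists2 g, G g & forall x, E x -> f x = g x.

Definition EG (G : set (R -> R)) (F : set (R -> R)) : set (set R) :=
  [set E | closed E /\ forall f, F f -> RG G f E].

Definition KG (G : set (R -> R)) : set (set (set R)) :=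
  [set K | exists2 F, F `<=` Cfun & K = EG G F].
End Defs.

(* Main.v *)
Require Import Defs.
From HB Require Import structures.
From mathcomp Require Import all_boot all_order all_algebra.
From mathcomp Require Import all_classical all_reals all_analysis.
From mathcomp Require Import ring lra.
Import Order.TTheory GRing.Theory Num.Theory.
Import numFieldNormedType.Exports.

Local Open Scope classical_set_scope.
Local Open Scope ring_scope.

Section Gen.
Context {R : realType}.

Lemma contE (h : R -> \bar R) x :
  (forall r, (r%:E < h x)%E -> \forall y \near x, (r%:E < h y)%E) ->
  (forall r, (h x < r%:E)%E -> \forall y \near x, (h y < r%:E)%E) ->
  h @ x --> h x.
Proof.
move=> Hl Hu; case E: (h x) => [r||].
- have h1 : forall e, 0 < e -> \forall y \near x, ((r - e)%:E < h y)%E.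
    by move=> e e0; apply: Hl; rewrite E lte_fin ltrBlDr ltrDl.
  have h2 : forall e, 0 < e -> \forall y \near x, (h y < (r + e)%:E)%E.
    by move=> e e0; apply: Hu; rewrite E lte_fin ltrDl.
  apply/fine_cvgP; split.
    apply: filterS2 (h1 1 ltr01) (h2 1 ltr01) => y.
    by rewrite fin_numE => a b; apply/andP; split;
        [rewrite gt_eqF // (lt_trans _ a) ?ltNyr|rewrite lt_eqF // (lt_trans b) ?ltry].
  apply/cvgrPdist_lt => e e0.
  apply: filterS2 (h1 e e0) (h2 e e0) => y /=.
  case: (h y) => [s||] //= a b.
  rewrite lte_fin in a; rewrite lte_fin in b.
  rewrite ltr_norml; apply/andP; split; lra.
- by apply/cvgeyPgt => A; apply: Hl; rewrite E ltry.
- by apply/cvgeNyPlt => A; apply: Hu; rewrite E ltNyr.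
Qed.


Definition hsup (V : R -> set R) (x : R) : \bar R := ereal_sup (EFin @` V x).

Lemma hsup_ub V x t : V x t -> (t%:E <= hsup V x)%E.
Proof. by move=> Vt; apply: ereal_sup_ubound; exists t. Qed.

Arguments hsup_ub {V x t}.

Lemma hsup_gt V x t : (t%:E < hsup V x)%E -> exists2 s, V x s & t < s.
Proof.
by move=> /ereal_sup_gt [_ [s Vs <-]]; rewrite lte_fin => ts; exists s.
Qed.

Arguments hsup_gt {V x t}.

Lemma near_notin {S : set R} {x} : closed S -> ~ S x -> \forall y \near x, ~ S y.
Proof.
move=> cS nSx; have : open (~` S) by exact: closed_openC.
by rewrite openE => /(_ x nSx).
Qed.

Lemma hsup_cont (V : R -> set R)
  (Vcl : forall f, continuous f -> closed [set y | V y (f y)])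
  (Vcv : forall y a b c, V y a -> V y b -> a <= c -> c <= b -> V y c)
  (Vfun : forall x s, V x s -> exists2 g, continuous g & g x = s /\ forall y, V y (g y))
  (Vne : exists2 g0, continuous g0 & forall y, V y (g0 y)) :
  continuous (hsup V).
Proof.
move=> x; apply: (@contE (hsup V) x) => r.
  move=> /hsup_gt [s Vs rs]; have [g gc [gx gV]] := Vfun _ _ Vs.
  have := @cvgr_gt _ _ _ _ g (g x) (gc x) r; rewrite gx => /(_ _ rs).
  apply: filterS => y ry; apply: (@lt_le_trans _ _ (g y)%:E).
    by rewrite lte_fin.
  exact: hsup_ub.
move=> hr; have [g0 g0c g0V] := Vne.
have hx0 := hsup_ub (g0V x).
have hfin : hsup V x \is a fin_num.
  by rewrite fin_numE; apply/andP; split;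
    [rewrite gt_eqF // (lt_le_trans _ hx0) ?ltNyr|rewrite lt_eqF // (lt_trans hr) ?ltry].
set hx := fine (hsup V x).
have hxE : hsup V x = hx%:E by rewrite fineK.
set c := (hx + r) / 2.
have hxr : hx < r by rewrite -lte_fin -hxE.
have hxc : hx < c by rewrite /c; lra.
have cr : c < r by rewrite /c; lra.
have nS : ~ V x c.
  by move=> /hsup_ub; rewrite hxE lee_fin leNgt hxc.
have Sc := Vcl (fun=> c) (@cst_continuous _ _ c).
have n1 := near_notin Sc nS.
have g0xc : g0 x < c by apply: le_lt_trans hxc; rewrite -lee_fin -hxE.
have n2 : \forall y \near x, g0 y < c by exact: (@cvgr_lt _ _ _ _ g0 (g0 x) (g0c x) c g0xc).
apply: filterS2 n1 n2 => y nVy g0y.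
suff : (hsup V y <= c%:E)%E by move=> /le_lt_trans; apply; rewrite lte_fin.
rewrite leNgt; apply/negP => /hsup_gt [s Vs cs].
by apply: nVy; apply: (Vcv _ _ _ _ (g0V y) Vs) => //; rewrite ltW.
Qed.


Definition bump (y0 r : R) : R -> R :=
  (fun=> 0) \max (fun y => 1 - `|y0 - y| / r).

Lemma bump_cont y0 r : continuous (bump y0 r).
Proof.
apply: max_fun_continuous; first exact: cst_continuous.
move=> y; apply: cvgB; first exact: cvg_cst.
apply: cvgM; last exact: cvg_cst.
apply: cvg_norm; apply: cvgB; [exact: cvg_cst|exact: cvg_id].
Qed.


Lemma bumpE y0 r y : bump y0 r y = Order.max 0 (1 - `|y0 - y| / r).
Proof. by []. Qed.

Lemma touch (V : R -> set R)
  (Vcl : forall f, continuous f -> closed [set y | V y (f y)])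
  (Vcv : forall y a b c, V y a -> V y b -> a <= c -> c <= b -> V y c)
  (g g0 : R -> R) (gc : continuous g) (g0c : continuous g0)
  (g0V : forall y, V y (g0 y)) y0 (lt0 : g0 y0 < g y0)
  (sup : forall y t, t < g y -> exists2 s, V y s & t < s) : V y0 (g y0).
Proof.
apply: contrapT => nV.
have n1 := near_notin (Vcl g gc) nV.
set eps := (g y0 - g0 y0) / 2.
have eps0 : 0 < eps by rewrite /eps; lra.
have n2 : \forall y \near y0, g0 y + eps < g y.
  have gc2 : (fun y => g y - g0 y) @ y0 --> g y0 - g0 y0.
    by apply: cvgB; [exact: gc|exact: g0c].
  have H := @cvgr_gt _ _ _ _ (fun y => g y - g0 y) (g y0 - g0 y0) gc2 eps.
  have : \forall y \near y0, eps < g y - g0 y by apply: H; rewrite /eps; lra.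
  by apply: filterS => y /=; lra.
have : \forall y \near y0, ~ V y (g y) /\ g0 y + eps < g y.
  by apply: filterS2 n1 n2 => y a b; split.
move=> /nbhs_ballP [r /= r0 Hr].
set r' := r / 2.
have r'0 : 0 < r' by rewrite /r'; lra.
have r'r : r' < r by rewrite /r'; lra.
clearbody r'.
set f := fun y => g y - eps * bump y0 r' y.
have fc : continuous f.
  move=> y; apply: cvgB; first exact: gc.
  by apply: cvgM; [exact: cvg_cst|exact: bump_cont].
have inB : forall y, `|y0 - y| < r' -> V y (f y).
  move=> y yr.
  have [_ g0y] : ~ V y (g y) /\ g0 y + eps < g y.
    by apply: Hr; rewrite /ball /=; lra.
  have bpos : 0 < bump y0 r' y.
    rewrite bumpE lt_max; apply/orP; right.
    by rewrite subr_gt0 ltr_pdivrMr // mul1r.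
  have ble : bump y0 r' y <= 1.
    rewrite bumpE ge_max ler01 /= lerBlDr lerDl.
    by apply: divr_ge0 => //; apply: ltW.
  have fy : f y < g y.
    by rewrite /f ltrBlDr ltrDl; apply: mulr_gt0.
  have [s Vs fs] := sup _ _ fy.
  apply: (Vcv _ _ _ _ (g0V y) Vs) => //; last exact: ltW.
  rewrite /f.
  have : eps * bump y0 r' y <= eps by nra.
  lra.
have cB := Vcl f fc.
have : V (y0 + r') (f (y0 + r')).
  apply: cB => N /nbhs_ballP [e e0 eN].
  set m := Order.min e r'.
  have m0 : 0 < m by rewrite lt_min e0 r'0.
  have me : m <= e by rewrite ge_min lexx.
  have mr : m <= r' by rewrite ge_min lexx orbT.
  exists (y0 + r' - m / 2); split.
    apply: inB.
    have -> : y0 - (y0 + r' - m / 2) = - (r' - m / 2) by ring.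
    rewrite normrN ger0_norm; lra.
  apply: eN; rewrite /ball /=.
  have -> : y0 + r' - (y0 + r' - m / 2) = m / 2 by ring.
  rewrite ger0_norm; lra.
have -> : f (y0 + r') = g (y0 + r').
  rewrite /f bumpE.
  have -> : y0 - (y0 + r') = - r' by ring.
  rewrite normrN ger0_norm ?(ltW r'0) // divff ?gt_eqF // subrr.
  by rewrite maxxx mulr0 subr0.
apply: (proj1 (Hr _ _)); rewrite /ball /=.
have -> : y0 - (y0 + r') = - r' by ring.
rewrite normrN ger0_norm; lra.
Qed.

End Gen.

Section Closed.
Context {R : realType}.

Lemma closed_le (u w : R -> \bar R) : continuous u -> continuous w ->
  closed [set x | (u x <= w x)%E].
Proof.
move=> uc wc; rewrite -openC openE => x /= /negP; rewrite -ltNge => wu.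
have nb : forall (h : R -> \bar R) (A : set (\bar R)), continuous h ->
    open A -> A (h x) -> \forall y \near x, A (h y).
  by move=> h A hc oA Ahx; apply: (hc x); apply: open_nbhs_nbhs.
have [[z /andP [wz zu]]|nz] := pselect (exists z, (w x < z < u x)%E).
  have n1 := nb w _ wc (@open_ereal_lt_ereal R z) wz.
  have n2 := nb u _ uc (@open_ereal_gt_ereal R z) zu.
  apply: filterS2 n1 n2 => y /= a b; apply/negP; rewrite -ltNge.
  exact: lt_trans a b.
have n1 := nb w _ wc (@open_ereal_lt_ereal R (u x)) wu.
have n2 := nb u _ uc (@open_ereal_gt_ereal R (w x)) wu.
apply: filterS2 n1 n2 => y /= a b uw; apply: nz; exists (w y).
by rewrite a andbT (lt_le_trans b uw).
Qed.

Lemma EFin_cont (f : R -> R) : continuous f -> continuous (fun y => (f y)%:E).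
Proof. by move=> fc y; apply: cvg_EFin; [exact: filterE|exact: fc]. Qed.

End Closed.

Section Main.
Variable R : realType.
Variable G : set (R -> R).
Hypothesis HGC : G `<=` @Cfun R.

Definition Vof (x : R) : set R := (fun g => g x) @` G.

Definition KEY := forall f : R -> R, continuous f ->
  closed [set y | Vof y (f y)] /\
  exists2 g, G g & forall y, Vof y (f y) -> f y = g y.

Lemma key_of (H1 : KG G `<=` [set CL E | E in [set E : set R | closed E]]) : KEY.
Proof.
move=> f fc.
have : KG G (EG G [set f]) by exists [set f] => // _ ->.
move=> /H1 [E cE HE].
have : EG G [set f] E by rewrite -HE; split.
case=> _ /(_ f erefl) [_ [_ [g Gg fg]]].
have AE : [set y | Vof y (f y)] `<=` E.
  move=> y [g' Gg' g'y].
  have : EG G [set f] [set y].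
    split; first exact: (accessible_closed_set1 (hausdorff_accessible (@Rhausdorff R))).
    move=> _ ->; split; first exact: fc.
    split; first exact: (accessible_closed_set1 (hausdorff_accessible (@Rhausdorff R))).
    by exists g' => // z ->.
  by rewrite -HE => -[_]; apply.
have EA : E `<=` [set y | Vof y (f y)] by move=> y Ey; exists g => //; rewrite fg.
have -> : [set y | Vof y (f y)] = E by apply/seteqP; split.
split => //; exists g => // y /AE; exact: fg.
Qed.


Lemma conv (Hk : KEY) y a b c :
  Vof y a -> Vof y b -> a <= c -> c <= b -> Vof y c.
Proof.
move=> Va Vb; rewrite le_eqVlt => /orP [/eqP <- //|ac].
rewrite le_eqVlt => /orP [/eqP -> //|cb].
apply: contrapT => nVc.
case: Va => g1 Gg1 g1y; case: Vb => g2 Gg2 g2y.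
have g1c : continuous g1 := HGC _ Gg1.
have g2c : continuous g2 := HGC _ Gg2.
have n1 := near_notin (Hk (fun=> c) (@cst_continuous _ _ c)).1 nVc.
have n2 : \forall z \near y, g1 z < c.
  by apply: (@cvgr_lt _ _ _ _ g1 (g1 y) (g1c y)); rewrite g1y.
have n3 : \forall z \near y, c < g2 z.
  by apply: (@cvgr_gt _ _ _ _ g2 (g2 y) (g2c y)); rewrite g2y.
have : \forall z \near y, ~ Vof z c /\ g1 z < c /\ c < g2 z.
  have n23 : \forall z \near y, g1 z < c /\ c < g2 z.
    by apply: filterS2 n2 n3 => z u v; split.
  by apply: filterS2 n1 n23 => z u v; split.
move=> /nbhs_ballP [d /= d0 Hd].
set p := y - d / 2; set q := y + d / 2.
have pq : p < q by rewrite /p /q; lra.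
have inb : forall z, p <= z -> z <= q -> ball y d z.
  move=> z; rewrite /p /q => pz zq; rewrite /ball /= ltr_norml.
  by apply/andP; split; lra.
set lam := (fun=> 1) \min ((fun=> 0) \max (fun z : R => (z - p) / (q - p))).
have lamc : continuous lam.
  apply: min_fun_continuous; first exact: cst_continuous.
  apply: max_fun_continuous; first exact: cst_continuous.
  move=> z; apply: cvgM; last exact: cvg_cst.
  by apply: cvgB; [exact: cvg_id|exact: cvg_cst].
set f := fun z => g1 z + lam z * (g2 z - g1 z).
have fc : continuous f.
  move=> z; apply: cvgD; first exact: g1c.
  by apply: cvgM; [exact: lamc|apply: cvgB; [exact: g2c|exact: g1c]].
have [_ [g Gg fg]] := Hk f fc.
have gc : continuous g := HGC _ Gg.
have lamp : lam p = 0.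
  by rewrite /lam /= subrr mul0r maxxx; apply/min_idPr; exact: ler01.
have lamq : lam q = 1.
  rewrite /lam /= divff ?subr_eq0 ?gt_eqF //.
  by rewrite (max_idPr ler01) minxx.
have fp : f p = g1 p by rewrite /f lamp mul0r addr0.
have fq : f q = g2 q by rewrite /f lamq mul1r addrC subrK.
have gp : g p < c.
  rewrite -fg fp; first by case: (Hd p (inb p (lexx _) (ltW pq))) => _ [].
  by rewrite ?fp; exists g1.
have gq : c < g q.
  rewrite -fg fq; first by case: (Hd q (inb q (ltW pq) (lexx _))) => _ [].
  by rewrite ?fq; exists g2.
have [z zpq gz] : exists2 z, z \in `[p, q] & g z = c.
  apply: IVT; first exact: ltW.
    exact: continuous_subspaceT.
  apply/andP; split.
    by rewrite ge_min (ltW gp).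
  by rewrite le_max (ltW gq) orbT.
move: zpq; rewrite in_itv /= => /andP [pz zq].
case: (Hd z (inb z pz zq)) => + _; apply.
by exists g.
Qed.


Definition Vn (x : R) : set R := [set t | Vof x (- t)].

Lemma dir12 (HGne : G !=set0) (Hk : KEY) :
  exists h1 h2 : R -> \bar R,
     continuous h1 /\ continuous h2 /\
     G = [set g : R -> R | continuous g /\
            (forall x, (h1 x <= (g x)%:E)%E /\ ((g x)%:E <= h2 x)%E)].
Proof.
have [g0 Gg0] := HGne.
have g0c : continuous g0 := HGC _ Gg0.
have Vcl : forall f, continuous f -> closed [set y | Vof y (f y)].
  by move=> f fc; exact: (Hk f fc).1.
have Vcv := conv Hk.
have Vfun : forall x s, Vof x s ->
    exists2 g, continuous g & g x = s /\ forall y, Vof y (g y).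
  move=> x s [g Gg gx]; exists g; first exact: HGC.
  by split => // y; exists g.
have Vne : exists2 g, continuous g & forall y, Vof y (g y).
  by exists g0 => // y; exists g0.
have Ncont : forall f : R -> R, continuous f -> continuous (fun y => - f y).
  by move=> f fc z; apply: cvgN; exact: fc.
have Vncl : forall f, continuous f -> closed [set y | Vn y (f y)].
  by move=> f fc; exact: (Hk _ (Ncont f fc)).1.
have Vncv : forall y a b c, Vn y a -> Vn y b -> a <= c -> c <= b -> Vn y c.
  move=> y a b c Va Vb ac cb; rewrite /Vn /=.
  by apply: (Vcv _ _ _ _ Vb Va); rewrite lerN2.
have Vnfun : forall x s, Vn x s ->
    exists2 g, continuous g & g x = s /\ forall y, Vn y (g y).
  move=> x s [g Gg gx]; exists (fun y => - g y); first exact: Ncont (HGC _ Gg).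
  by split; [rewrite gx opprK|move=> y; exists g => //; rewrite opprK].
have Vnne : exists2 g, continuous g & forall y, Vn y (g y).
  exists (fun y => - g0 y); first exact: Ncont.
  by move=> y; exists g0 => //; rewrite opprK.
have h2c := @hsup_cont R Vof Vcl Vcv Vfun Vne.
have hnc := @hsup_cont R Vn Vncl Vncv Vnfun Vnne.
exists (fun x => - hsup Vn x)%E, (hsup Vof); split.
  move=> x; exact: (continuous_comp (hnc x) (@oppe_continuous R _)).
split => //.
apply/seteqP; split.
  move=> g Gg; split; first exact: HGC.
  move=> x; split; last by apply: hsup_ub; exists g.
  rewrite leeNl -EFinN; apply: hsup_ub.
  by exists g => //; rewrite opprK.
move=> g [gc Hb].
have allV : forall y, Vof y (g y).
  move=> y0.
  case: (ltgtP (g0 y0) (g y0)) => [lt0|lt0|eq0].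
  - apply: (@touch R Vof Vcl Vcv g g0 gc g0c _ y0 lt0).
      by move=> y; exists g0.
    move=> y t tg; apply: hsup_gt.
    by apply: (@lt_le_trans _ _ (g y)%:E); [rewrite lte_fin|case: (Hb y)].
  - have := (@touch R Vn Vncl Vncv (fun y => - g y) (fun y => - g0 y)
        (Ncont _ gc) (Ncont _ g0c) _ y0).
    rewrite /Vn /= opprK; apply.
    + by move=> y; exists g0 => //; rewrite opprK.
    + by rewrite ltrN2.
    move=> y t tg; apply: (@hsup_gt R Vn y t).
    apply: (@lt_le_trans _ _ (- g y)%:E); first by rewrite lte_fin.
    by rewrite EFinN -leeNl; case: (Hb y).
  - by exists g0.
have [_ [g' Gg' fg]] := Hk g gc.
suff -> : g = g' by [].
by apply/funext => y; apply: fg.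
Qed.


Lemma dir21 (HGne : G !=set0) (h1 h2 : R -> \bar R)
  (h1c : continuous h1) (h2c : continuous h2)
  (HG : G = [set g : R -> R | continuous g /\
            (forall x, (h1 x <= (g x)%:E)%E /\ ((g x)%:E <= h2 x)%E)]) :
  KG G `<=` [set CL E | E in [set E : set R | closed E]].
Proof.
move=> K [F FC ->].
have [g0 Gg0] := HGne.
have Hg0 : forall x, (h1 x <= (g0 x)%:E)%E /\ ((g0 x)%:E <= h2 x)%E.
  by move: Gg0; rewrite HG => -[].
set E := [set x | forall f, F f -> (h1 x <= (f x)%:E)%E /\ ((f x)%:E <= h2 x)%E].
exists E.
  have -> : E = \bigcap_(f in F) ([set x | (h1 x <= (f x)%:E)%E] `&`
                                  [set x | ((f x)%:E <= h2 x)%E]).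
    apply/seteqP; split => x /=.
      by move=> Ex f Ff; have [a b] := Ex f Ff; split.
    by move=> Hx f Ff; have [a b] := Hx f Ff; split.
  apply: closed_bigI => f Ff; apply: closedI.
    by apply: closed_le => //; apply: EFin_cont; exact: FC.
  by apply: closed_le => //; apply: EFin_cont; exact: FC.
apply/seteqP; split.
  move=> E' [cE' sub]; split => // f Ff; split; first exact: FC.
  split => //.
  have fc : continuous f := FC _ Ff.
  set k := h1 \max ((fun y => (f y)%:E) \min h2).
  have kc : continuous k.
    by apply: max_fun_continuous => //; apply: min_fun_continuous => //;
      exact: EFin_cont.
  have kfin : forall y, k y \is a fin_num.
    move=> y; have [a b] := Hg0 y; rewrite fin_numElt; apply/andP; split.
      rewrite /k /= lt_max; apply/orP; right.
      rewrite lt_min ltNyr /=.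
      by apply: (lt_le_trans _ b); rewrite ltNyr.
    rewrite /k /= gt_max; apply/andP; split.
      by apply: (le_lt_trans a); rewrite ltry.
    by rewrite gt_min ltry.
  have kE : forall y, (fine (k y))%:E = k y by move=> y; rewrite fineK.
  exists (fun y => fine (k y)).
    rewrite HG; split.
      move=> y; have : k @ y --> k y := kc y.
      by rewrite -[X in _ --> X]kE => /fine_cvgP [].
    move=> y; rewrite kE; have [a b] := Hg0 y; split.
      by rewrite /k /= le_max lexx.
    rewrite /k /= ge_max ge_min lexx orbT andbT.
    exact: le_trans a b.
  move=> x E'x; have [l u] := sub x E'x f Ff.
  apply: EFin_inj; rewrite kE /k /=.
  by rewrite (min_idPl u) (max_idPr l).
move=> E' [cE' HE']; split => // x E'x f Ff.
have [_ [_ [g Gg fg]]] := HE' f Ff.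
rewrite fg //; move: Gg; rewrite HG => -[_]; apply.
Qed.

End Main.

Theorem theorem3p3 (R : realType) (G : set (R -> R))
  (HGC : G `<=` @Cfun R) (HGne : G !=set0) :
  (KG G `<=` [set CL E | E in [set E : set R | closed E]]) <->
  (exists h1 h2 : R -> \bar R,
     continuous h1 /\ continuous h2 /\
     G = [set g : R -> R | continuous g /\
            (forall x, (h1 x <= (g x)%:E)%E /\ ((g x)%:E <= h2 x)%E)]).
Proof.
split => [H1 | [h1 [h2 [h1c [h2c HG]]]]].
  exact: (@dir12 R G HGC HGne (@key_of R G H1)).
exact: (@dir21 R G HGne h1 h2 h1c h2c HG).
Qed.
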